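(* Let $N\ge1$ be an integer and $a,b$ complex numbers such that all denominators below are nonzero. Then \[ B^{[N]}(a,b)=\frac{1}{N}\sum_{n=0}^N \frac{(1+n)_{N-n}}{(a+n)_{N-n}}\,\frac{(1+N-n)_n}{(b+N-n)_n}, \] where $B^{[N]}(a,b)=\dfrac{(a+b)_N\,(N-1)!}{(a)_N\,(b)_N}$.
   Context: $(x)_m=x(x+1)\cdots(x+m-1)$ denotes the rising factorial, with $(x)_0=1$. The truncated beta function is $B^{[N]}(a,b)=\frac{a+b}{ab}\prod_{n=1}^{N-1}\frac{(a+b+n)n}{(a+n)(b+n)}=\frac{(a+b)_N(N-1)!}{(a)_N(b)_N}$. *)

(* Defs.v *)
From HB Require Import structures.
From mathcomp Require Import all_boot all_order all_algebra.
From mathcomp Require Import complex.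
From mathcomp Require Import reals.
Set Implicit Arguments. Unset Strict Implicit. Unset Printing Implicit Defensive.
Import Order.TTheory GRing.Theory Num.Theory.
Local Open Scope ring_scope.

Definition rising {R : nzRingType} (x : R) (m : nat) : R :=
  \prod_(i < m) (x + i%:R).

Definition truncBeta {R : fieldType} (N : nat) (a b : R) : R :=
  rising (a + b) N * (N.-1)`!%:R / (rising a N * rising b N).

(* Main.v *)
Require Import Defs.
From HB Require Import structures.
From mathcomp Require Import all_boot all_order all_algebra.
From mathcomp Require Import complex.
From mathcomp Require Import reals.
From mathcomp Require Import ring.
Import Order.TTheory GRing.Theory Num.Theory.
Local Open Scope ring_scope.

Section Aux.
Variable F : numFieldType.

Lemma risingS (x : F) m : rising x m.+1 = rising x m * (x + m%:R).
Proof. by rewrite /rising big_ord_recr. Qed.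

Lemma rising0 (x : F) : rising x 0 = 1.
Proof. by rewrite /rising big_ord0. Qed.

Lemma risingD (x : F) m k : rising x (m + k) = rising x m * rising (x + m%:R) k.
Proof.
elim: k => [|k IH]; first by rewrite addn0 rising0 mulr1.
by rewrite addnS !risingS IH natrD addrA mulrA.
Qed.

Lemma rising1 m : rising (1 : F) m = m`!%:R.
Proof.
elim: m => [|m IH]; first by rewrite rising0.
by rewrite risingS IH factS natrM -natr1 mulrC addrC.
Qed.

Lemma vander (a b : F) N :
  \sum_(n < N.+1) 'C(N, n)%:R * (rising a n * rising b (N - n)) = rising (a + b) N.
Proof.
elim: N => [|N IH].
  by rewrite big_ord1 /= !rising0 !mulr1.
rewrite risingS -IH mulr_suml.
transitivity (\sum_(i < N.+1) ('C(N, i)%:R * (rising a i.+1 * rising b (N - i)) +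
   'C(N, i)%:R * (rising a i * rising b (N.+1 - i)))); last first.
  apply: eq_bigr => i _.
  have hi : (i <= N)%N by rewrite -ltnS.
  rewrite (subSn hi) !risingS.
  have e : (N%:R : F) = i%:R + (N - i)%:R by rewrite -natrD subnKC.
  rewrite e; ring.
rewrite big_split /= big_ord_recl /=.
under eq_bigr => i _ do rewrite binS natrD mulrDl subSS.
rewrite big_split /= addrA [RHS]addrC; congr (_ + _).
rewrite [in RHS]big_ord_recl big_ord_recr /= (bin_small (ltnSn N)) mul0r addr0.
rewrite !bin0; congr (_ + _).
Qed.

Lemma main N (a b : F) (hN : (1 <= N)%N)
  (ha : rising a N != 0) (hb : rising b N != 0) :
  truncBeta N a b =
  N%:R^-1 * \sum_(0 <= n < N.+1)
     (rising (1 + n%:R) (N - n) / rising (a + n%:R) (N - n)) *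
     (rising (1 + (N - n)%:R) n / rising (b + (N - n)%:R) n).
Proof.
rewrite big_mkord.
rewrite (eq_bigr (fun n : 'I_N.+1 => N`!%:R / (rising a N * rising b N) *
   ('C(N, n)%:R * (rising a n * rising b (N - n))))); last first.
  move=> n _.
  have hn : (n <= N)%N by rewrite -ltnS.
  have hA := risingD a n (N - n); rewrite subnKC // in hA.
  have hB := risingD b (N - n) n; rewrite subnK // in hB.
  have hP := risingD 1 n (N - n); rewrite subnKC // !rising1 in hP.
  have hQ := risingD 1 (N - n) n; rewrite subnK // !rising1 in hQ.
  have hC := bin_fact hn.
  set A := rising (a + n%:R) (N - n) in hA *.
  set B := rising (b + (N - n)%:R) n in hB *.
  set P := rising (1 + n%:R) (N - n) in hP *.
  set Q := rising (1 + (N - n)%:R) n in hQ *.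
  move: ha hb; rewrite hA hB !mulf_eq0 !negb_or => /andP[ha1 ha2] /andP[hb1 hb2].
  have hf : (n`!%:R : F) != 0 by rewrite pnatr_eq0 -lt0n fact_gt0.
  have hg : ((N - n)`!%:R : F) != 0 by rewrite pnatr_eq0 -lt0n fact_gt0.
  have eN : (N`!%:R : F) = 'C(N, n)%:R * n`!%:R * (N - n)`!%:R
    by rewrite -hC !natrM mulrA.
  have eP : P = 'C(N, n)%:R * (N - n)`!%:R.
    apply: (mulfI hf); rewrite -hP eN; ring.
  have eQ : Q = 'C(N, n)%:R * n`!%:R.
    apply: (mulfI hg); rewrite -hQ eN; ring.
  rewrite eP eQ eN; field.
  by rewrite hb2 hb1 ha2 ha1.
rewrite -mulr_sumr vander /truncBeta.
case: N hN ha hb => [//|N] _ ha hb /=.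
rewrite factS natrM.
field.
by rewrite ha hb nat1r pnatr_eq0.
Qed.

End Aux.

Local Open Scope complex_scope.

Theorem proposition2p1 (R : realType) (N : nat) (a b : R[i])
  (hN : (1 <= N)%N)
  (ha : rising a N != 0) (hb : rising b N != 0)
  (han : forall n : nat, (n <= N)%N -> rising (a + n%:R) (N - n) != 0)
  (hbn : forall n : nat, (n <= N)%N -> rising (b + (N - n)%:R) n != 0) :
  truncBeta N a b =
  N%:R^-1 * \sum_(0 <= n < N.+1)
     (rising (1 + n%:R) (N - n) / rising (a + n%:R) (N - n)) *
     (rising (1 + (N - n)%:R) n / rising (b + (N - n)%:R) n).
Proof. exact (@main R[i] N a b hN ha hb). Qed.
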